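(* For every caterpillar $T$, \[U_T(x_1=0,x_2,x_3,\ldots)=U^L_T(x_1=0,x_2,x_3,\ldots).\] Furthermore, if $T$ is proper, then $U^L_T(\mathbf{x})$ does not depend on $x_1$; in particular, in that case $U^L_T$ is an evaluation of the $U$-polynomial of $T$ (namely $U^L_T(\mathbf{x})=U_T(0,x_2,x_3,\ldots)$).
   Context: Let $\mathbf{x}=x_1,x_2,\ldots$ be commuting indeterminates; for a partition $\lambda=\lambda_1\lambda_2\cdots\lambda_l$ put $\mathbf{x}_\lambda=x_{\lambda_1}\cdots x_{\lambda_l}$. For a tree $T=(V,E)$ and $A\subseteq E$, let $T|_A$ be the spanning subgraph $(V,A)$ and $\lambda(A)$ the partition of $|V|$ formed by the sizes of the connected components of $T|_A$. The $U$-polynomial of the tree $T$ is $U_T(\mathbf{x})=\sum_{A\subseteq E}\mathbf{x}_{\lambda(A)}$. A caterpillar is a tree in which the subgraph induced by the internal (non-leaf) vertices is a non-trivial path, the spine; $P(T)$ denotes the set of spine edges and $L(T)=E\setminus P(T)$ the set of leaf-edges. A caterpillar is proper if every internal vertex is adjacent to at least one leaf. The restricted weighted polynomial is $U^L_T(\mathbf{x})=\sum_{A\subseteq E,\ L(T)\subseteq A}\mathbf{x}_{\lambda(A)}$. *)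

(* Defs.v *)
From mathcomp Require Import all_boot all_order all_algebra.
Set Implicit Arguments. Unset Strict Implicit. Unset Printing Implicit Defensive.
Import GRing.Theory.
Local Open Scope ring_scope.

Section Graphs.
Variable V : finType.

(* A simple graph on the vertex set V is given by its edge set
   E : {set {set V}}, each edge being a 2-element subset of V. *)
Definition simple_edges (E : {set {set V}}) : Prop :=
  forall e, e \in E -> #|e| = 2%N.

Definition adj (A : {set {set V}}) : rel V := fun x y => [set x; y] \in A.

Definition connected_graph (E : {set {set V}}) : Prop :=
  forall x y : V, connect (adj E) x y.

Definition acyclic (E : {set {set V}}) : Prop :=
  forall s : seq V, uniq s -> (3 <= size s)%N -> ~~ cycle (adj E) s.

Definition is_tree (E : {set {set V}}) : Prop :=
  simple_edges E /\ connected_graph E /\ acyclic E.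

Definition degree (E : {set {set V}}) (v : V) : nat := #|[set e in E | v \in e]|.
Definition is_leaf (E : {set {set V}}) (v : V) : bool := degree E v == 1%N.
Definition is_internal (E : {set {set V}}) (v : V) : bool := (1 < degree E v)%N.

Definition spine_edges (E : {set {set V}}) : {set {set V}} :=
  [set e in E | [forall v in e, is_internal E v]].
Definition leaf_edges (E : {set {set V}}) : {set {set V}} := E :\: spine_edges E.

(* the subgraph induced by the internal vertices is a non-trivial path:
   its vertices can be listed without repetition as s_0,...,s_k, k >= 1,
   and its edges are exactly the {s_i, s_(i+1)}. *)
Definition is_caterpillar (E : {set {set V}}) : Prop :=
  is_tree E /\
  exists s : seq V,
    [/\ uniq s, (2 <= size s)%N, (forall v, (v \in s) = is_internal E v) &
        spine_edges E = [set [set p.1; p.2] | p in zip s (behead s)]].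

Definition is_proper_caterpillar (E : {set {set V}}) : Prop :=
  is_caterpillar E /\
  forall v, is_internal E v -> exists u, is_leaf E u && ([set u; v] \in E).

Definition components (A : {set {set V}}) : {set {set V}} :=
  [set [set y | connect (adj A) x y] | x : V].

Definition xlam (R : comNzRingType) (x : nat -> R) (A : {set {set V}}) : R :=
  \prod_(C in components A) x #|C|.

Definition Upoly (R : comNzRingType) (E : {set {set V}}) (x : nat -> R) : R :=
  \sum_(A : {set {set V}} | A \subset E) xlam x A.

Definition ULpoly (R : comNzRingType) (E : {set {set V}}) (x : nat -> R) : R :=
  \sum_(A : {set {set V}} | (A \subset E) && (leaf_edges E \subset A)) xlam x A.

End Graphs.

Definition kill1 (R : comNzRingType) (x : nat -> R) : nat -> R :=
  fun i => if i == 1%N then 0 else x i.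

(* Main.v *)
Require Import Defs.
From mathcomp Require Import all_boot all_order all_algebra.
Set Implicit Arguments. Unset Strict Implicit.
Import GRing.Theory.
Local Open Scope ring_scope.

Section H.
Variable V : finType.
Implicit Types (E A : {set {set V}}) (v w : V).

Lemma degree_pos E e w : e \in E -> w \in e -> (0 < degree E w)%N.
Proof.
move=> eE we; rewrite /degree card_gt0; apply/set0Pn; exists e; by rewrite inE eE we.
Qed.

Lemma leaf_unique E e f v : e \in E -> v \in e -> ~~ is_internal E v ->
  f \in E -> v \in f -> f = e.
Proof.
move=> eE ve ni fE vf.
have h1 := degree_pos eE ve.
have : degree E v == 1%N by move: ni; rewrite /is_internal -leqNgt => h2; rewrite eqn_leq h1 h2.
rewrite /degree => /cards1P [z hz].
have : e \in [set e in E | v \in e] by rewrite inE eE ve.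
have : f \in [set e in E | v \in e] by rewrite inE fE vf.
by rewrite hz !inE => /eqP -> /eqP ->.
Qed.

Lemma in_leaf E e v : e \in E -> v \in e -> ~~ is_internal E v -> e \in leaf_edges E.
Proof.
move=> eE ve ni; rewrite /leaf_edges inE eE andbT /spine_edges inE eE /=.
apply/negP => /forall_inP H; by rewrite H in ni.
Qed.

Lemma adj_sym A : symmetric (adj A).
Proof. by move=> x y; rewrite /adj setUC. Qed.

Lemma comp_single A v : (forall y, ~~ adj A v y) -> [set v] \in components A.
Proof.
move=> H; apply/imsetP; exists v => //; apply/setP => y; rewrite !inE.
apply/eqP/idP => [-> | /connectP [[|z p] /= pth ->] //]; first exact: connect0.
by move: pth; rewrite (negbTE (H z)).
Qed.

Lemma xlam_kill (R : comNzRingType) (x : nat -> R) A v :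
  [set v] \in components A -> xlam (kill1 x) A = 0.
Proof. by move=> h; rewrite /xlam (bigD1 [set v]) //= cards1 /kill1 /= mul0r. Qed.

Lemma comp_big A C : (forall w, exists u, (u != w) && adj A w u) ->
  C \in components A -> #|C| != 1%N.
Proof.
move=> H /imsetP [w _ ->]; have [u /andP [uw au]] := H w.
have : ([set w; u] \subset [set y | connect (adj A) w y]).
  apply/subsetP => z; rewrite !inE => /orP [] /eqP ->; first exact: connect0.
  exact: connect1.
move/subset_leq_card; rewrite cards2 eq_sym uw.
by case: (#|_|) => [|[|n]].
Qed.

Lemma part1 E (R : comNzRingType) (x : nat -> R) :
  Upoly E (kill1 x) = ULpoly E (kill1 x).
Proof.
rewrite /Upoly /ULpoly (bigID (fun A => leaf_edges E \subset A)) /=.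
rewrite [X in _ + X]big1 ?addr0 // => A /andP [AE /subsetPn [e eL eA]].
move: eL; rewrite /leaf_edges inE /spine_edges inE => /andP [h eE]; move: h; rewrite eE /= => /forall_inPn [v ve ni].
apply: (@xlam_kill _ _ _ v); apply: comp_single => y; apply/negP => ay.
have yE : [set v; y] \in E by apply: (subsetP AE).
have := leaf_unique eE ve ni yE; rewrite !inE eqxx => /(_ isT) h.
by move: eA; rewrite -h; move: ay; rewrite /adj => ->.
Qed.


Lemma all_adj E A : is_proper_caterpillar E -> A \subset E -> leaf_edges E \subset A ->
  forall w, exists u, (u != w) && adj A w u.
Proof.
move=> [[[se [conn _]] [s [us ss ins _]]] prop] AE LA w.
case: (ltngtP (degree E w) 1) => hd.
-
  exfalso; move: hd; rewrite ltnS leqn0 => /eqP d0.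
  case: s us ss ins => [|a s] //= _ _ ins.
  have ai : is_internal E a by rewrite -ins inE eqxx.
  have : connect (adj E) w a by apply: conn.
  case/connectP => [[|z p]] /=.
    by move=> _ aw; move: ai; rewrite /is_internal aw d0.
  case/andP => wz _ _.
  by have := degree_pos wz (set21 w z); rewrite d0.
-
  have [u /andP [ul ue]] := prop w hd.
  have uw : u != w by apply/eqP => uw; move: ul hd; rewrite uw /is_leaf => /eqP ->.
  exists u; rewrite uw /= /adj setUC; apply: (subsetP LA).
  apply: (in_leaf ue (set21 u w)); by move: ul; rewrite /is_leaf /is_internal => /eqP ->.
-
  have : [set e in E | w \in e] != set0 by rewrite -card_gt0 -/(degree E w) hd.
  case/set0Pn => e; rewrite inE => /andP [eE we].
  have := se e eE => /eqP /cards2P [a [b [ab he]]].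
  have eA : e \in A.
    apply: (subsetP LA); apply: (in_leaf eE we); by rewrite /is_internal hd.
  move: we; rewrite he !inE => /orP [] /eqP wab.
  + exists b; rewrite wab eq_sym ab /adj -he //.
  + exists a; rewrite wab ab /adj setUC -he //.
Qed.

End H.

Theorem proposition2p1 (V : finType) (E : {set {set V}}) :
  is_caterpillar E ->
  (forall (R : comNzRingType) (x : nat -> R),
      Upoly E (kill1 x) = ULpoly E (kill1 x)) /\
  (is_proper_caterpillar E ->
     (forall (R : comNzRingType) (x y : nat -> R),
        (forall i, i != 1%N -> x i = y i) -> ULpoly E x = ULpoly E y) /\
     (forall (R : comNzRingType) (x : nat -> R),
        ULpoly E x = Upoly E (kill1 x))).
Proof.
move=> cat; have p1 := part1 E.
have p2 : is_proper_caterpillar E -> forall (R : comNzRingType) (x y : nat -> R),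
        (forall i, i != 1%N -> x i = y i) -> ULpoly E x = ULpoly E y.
  move=> pc R x y hxy; apply: eq_bigr => A /andP [AE LA].
  apply: eq_bigr => C CA; apply: hxy; exact: comp_big (all_adj pc AE LA) CA.
split => // pc; split; first exact: p2.
move=> R x; rewrite p1; apply: p2 => // i /negPf; by rewrite /kill1 => ->.
Qed.
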